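(* Let $\Omega$ be the first uncountable ordinal, $[0,\Omega]$ with the order topology, and $X:=[0,\Omega]^2$. Let $Y:=X\times\{\bullet,\uparrow,\downarrow\}/\!\sim$, where $\sim$ identifies all three points $(\Omega,\Omega,t)$, identifies $(\Omega,\alpha,\bullet)$ with $(\Omega,\alpha,\uparrow)$ for all $\alpha\in[0,\Omega]$, and identifies $(\alpha,\Omega,\bullet)$ with $(\alpha,\Omega,\downarrow)$ for all $\alpha\in[0,\Omega]$; let $\pi:Y\to X$ be induced by the first projection. Then $\pi$ is a branched cover with fibers of cardinality $1$ at $(\Omega,\Omega)$, $2$ on $X_2:=\{\Omega\}\times[0,\Omega)\sqcup[0,\Omega)\times\{\Omega\}$, and $3$ on $[0,\Omega)^2$, and all three strata are normal spaces. Moreover, let $\mu_x$ be the uniform probability measure on the two-point fiber $\pi^{-1}(x)$ for $x\in X_2$ and the point mass for $x=(\Omega,\Omega)$. Then there is no weak$^*$-continuous family $x\mapsto\mu_x$, $x\in X$, of probability measures $\mu_x$ on $\pi^{-1}(x)$ (viewed in $C(Y)^*$) extending this family such that $\mu_x$ gives positive mass to every point of $\pi^{-1}(x)$ for all $x\in[0,\Omega)^2$.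
   Context: A branched cover is a continuous open surjection of compact Hausdorff spaces with uniformly bounded finite fibers. A weak$^*$-continuous family of probability measures $\mu_x$ on $\pi^{-1}(x)$ means $x\mapsto\int f\,d\mu_x$ is continuous on $X$ for every $f\in C(Y)$; such families correspond to conditional expectations $C(Y)\to C(X)$. *)

(* Defs.v *)
From HB Require Import structures.
From mathcomp Require Import all_boot all_order all_algebra.
From mathcomp Require Import all_classical all_reals.
From mathcomp Require Import topology_structure product_topology order_topology
  discrete_topology quotient_topology subspace_topology separation_axioms compact.
From mathcomp Require Import normedtype.

Set Implicit Arguments.
Unset Strict Implicit.
Unset Printing Implicit Defensive.

Import Order.TTheory GRing.Theory Num.Theory.
Import numFieldNormedType.Exports.
Local Open Scope classical_set_scope.
Local Open Scope ring_scope.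

Definition Label := discrete_topology 'I_3.
HB.instance Definition _ := Choice.on Label.
HB.instance Definition _ := Topological.on Label.
Lemma Label_discrete : (nbhs : Label -> set_system Label) = principal_filter.
Proof. exact: nbhs_principalE. Qed.
Definition lbullet : Label := (0 : 'I_3).
Definition lup : Label := (1 : 'I_3).
Definition ldown : Label := (2 : 'I_3).

Section Construction.
Context {d : Order.disp_t} (T : orderTopologicalType d) (Omega : T).

Definition Xsp := (T * T)%type.

Definition nf (p : Xsp * Label) : Xsp * Label :=
  let: ((a, b), t) := p in
  if (a == Omega) && (b == Omega) then ((a, b), lbullet)
  else if (a == Omega) && (t == lup) then ((a, b), lbullet)
  else if (b == Omega) && (t == ldown) then ((a, b), lbullet)
  else p.

Definition simrel (p q : Xsp * Label) : bool := nf p == nf q.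

Lemma simrel_refl : reflexive simrel.
Proof. by move=> p; rewrite /simrel. Qed.
Lemma simrel_sym : symmetric simrel.
Proof. by move=> p q; rewrite /simrel eq_sym. Qed.
Lemma simrel_trans : transitive simrel.
Proof. by move=> q p r; rewrite /simrel => /eqP -> /eqP ->. Qed.

Canonical simrel_equiv := EquivRel simrel simrel_refl simrel_sym simrel_trans.

Definition Ysp := quotient_topology {eq_quot simrel_equiv}%qT.
HB.instance Definition _ := Topological.on Ysp.

Definition piY (y : Ysp) : Xsp := (repr y).1.

Definition fiber (x : Xsp) : set Ysp := piY @^-1` [set x].

Definition stratum1 : set Xsp := [set (Omega, Omega)].
Definition stratum2 : set Xsp :=
  [set x : Xsp | (x.1 = Omega /\ (x.2 < Omega)%O) \/ ((x.1 < Omega)%O /\ x.2 = Omega)].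
Definition stratum3 : set Xsp := [set x : Xsp | (x.1 < Omega)%O /\ (x.2 < Omega)%O].

End Construction.

Definition branched_cover (X Y : topologicalType) (p : Y -> X) : Prop :=
  [/\ compact [set: X] /\ hausdorff_space X,
      compact [set: Y] /\ hausdorff_space Y,
      continuous p,
      (forall U : set Y, open U -> open (p @` U)) &
      (forall x : X, exists y, p y = x) /\
      (exists n : nat, forall x : X, p @^-1` [set x] #<= `I_n)%card].

Arguments piY {d T Omega} y.
Arguments fiber {d T} Omega x _.
Arguments stratum1 {d T} Omega _.
Arguments stratum2 {d T} Omega _.
Arguments stratum3 {d T} Omega _.
Arguments Ysp {d T} Omega.

(* Main.v *)
Require Import Defs.
From HB Require Import structures.
From mathcomp Require Import all_boot all_order all_algebra.
From mathcomp Require Import all_classical all_reals.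
From mathcomp Require Import topology_structure product_topology order_topology
  discrete_topology quotient_topology subspace_topology separation_axioms compact.
From mathcomp Require Import normedtype.

Import Order.TTheory GRing.Theory Num.Theory.
Import numFieldNormedType.Exports.
Local Open Scope classical_set_scope.
Local Open Scope ring_scope.
Local Open Scope quotient_scope.
Section S.
Context {d : Order.disp_t} (T : orderTopologicalType d) (Omega : T).
Local Notation Y := (Ysp Omega).
Local Notation nf := (nf Omega).

Lemma lab_neq : [/\ lup != lbullet, ldown != lbullet & lup != ldown].
Proof. by []. Qed.

Lemma nfE (a b : T) (t : Label) : nf ((a, b), t) =
  ((a, b), if ((a == Omega) && (b == Omega)) || ((a == Omega) && (t == lup)) ||
              ((b == Omega) && (t == ldown)) then lbullet else t).
Proof.
rewrite /Defs.nf; by case: (a == Omega); case: (b == Omega); case: (t == lup); case: (t == ldown).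
Qed.

Lemma nf1 p : (nf p).1 = p.1.
Proof. by case: p => [[a b] t]; rewrite nfE. Qed.

Lemma piE (p q : Xsp T * Label) : (\pi_Y p = \pi_Y q) <-> nf p = nf q.
Proof.
split => [/eqquotP/eqP//|H]; apply/eqquotP; exact/eqP.
Qed.

Lemma nf_repr p : nf (repr (\pi_Y p)) = nf p.
Proof. by apply/piE; rewrite reprK. Qed.

Lemma piY_pi p : piY (\pi_Y p) = p.1.
Proof. by rewrite /piY -(nf1 (repr _)) nf_repr nf1. Qed.

End S.
Section S2.
Context {d : Order.disp_t} {T : orderTopologicalType d}.
Local Open Scope order_scope.

Lemma nbhs_char (x : T) (N : set T) : nbhs x N ->
  (exists2 c, c < x & forall y, c < y -> y <= x -> N y) \/ (forall y, y <= x -> N y).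
Proof.
rewrite itv_nbhsE => -[[l r] [oi xi] sub].
have H y : l <= BLeft y -> y <= x -> N y.
  move=> ly yx; apply: sub => /=; rewrite itv_boundlr ly /=.
  move: xi; rewrite itv_boundlr => /andP[_]; apply: le_trans; by rewrite bnd_simp.
clear sub; move: oi xi H; case: l => [[] a|[]] //=.
- by move=> _ xi H; left; exists a; [move: xi; rewrite itv_boundlr => /andP[]; rewrite bnd_simp|move=> y ay; apply: H; rewrite bnd_simp].
- by move=> _ xi H; right => y; apply: H.
Qed.
End S2.
Section Gen.

Lemma nbhsX {U V : topologicalType} (x : U) (y : V) A B :
  nbhs x A -> nbhs y B -> nbhs ((x, y) : U * V) (A `*` B).
Proof. by move=> nA nB; exists (A, B). Qed.
Arguments nbhsX {U V x y A B}.

Lemma nbhsX_inv {U V : topologicalType} (p : U * V) P : nbhs p P ->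
  exists A B, [/\ nbhs p.1 A, nbhs p.2 B & A `*` B `<=` P].
Proof. by move=> [[A B] /= [nA nB] sub]; exists A, B. Qed.

Lemma prod_hausdorff {U V : topologicalType} :
  hausdorff_space U -> hausdorff_space V -> hausdorff_space (U * V)%type.
Proof.
move=> hU hV [p1 p2] [q1 q2] cl; congr (_, _).
  apply: hU => A B nA nB.
  have [[z1 z2] [[/= ? _] [/= ? _]]] := cl _ _ (nbhsX nA (filterT : nbhs p2 setT))
     (nbhsX nB (filterT : nbhs q2 setT)).
  by exists z1.
apply: hV => A B nA nB.
have [[z1 z2] [[/= _ ?] [/= _ ?]]] := cl _ _ (nbhsX (filterT : nbhs p1 setT) nA)
   (nbhsX (filterT : nbhs q1 setT) nB).
by exists z2.
Qed.

Lemma inj_hausdorff {U V : topologicalType} (f : U -> V) :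
  continuous f -> injective f -> hausdorff_space V -> hausdorff_space U.
Proof.
move=> cf fi hV p q cl; apply: fi; apply: hV => A B nA nB.
have [z [Az Bz]] := cl _ _ (cf p _ nA) (cf q _ nB).
by exists (f z).
Qed.

Lemma label_cont {X Z : topologicalType} (h : X * Label -> Z) :
  (forall t, continuous (fun x => h (x, t))) -> continuous h.
Proof.
move=> ch [x t] C nC.
have nA := ch t x _ nC.
have nt : nbhs t [set t] by rewrite Label_discrete.
apply: filterS (nbhsX nA nt) => -[x' t'] /= [H ->]; exact: H.
Qed.

Lemma disjP {U : Type} (A B : set U) z : A `&` B = set0 -> A z -> B z -> False.
Proof. by move=> AB Az Bz; have : (A `&` B) z by []; rewrite AB. Qed.

End Gen.
Arguments nbhsX {U V x y A B}.
Section Yfacts.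
Context {d : Order.disp_t} (T : orderTopologicalType d) (Omega : T).
Local Notation Y := (Ysp Omega).
Local Notation nf := (nf Omega).

Lemma label_cases (t : Label) : [\/ t = lbullet, t = lup | t = ldown].
Proof.
case: t => [[|[|[|//]]] Ht]; [constructor 1|constructor 2|constructor 3]; exact: (@ord_inj 3).
Qed.

Lemma cont_pair {X U V : topologicalType} (f : X -> U) (g : X -> V) :
  continuous f -> continuous g -> continuous (fun x => (f x, g x)).
Proof.
move=> cf cg x C /nbhsX_inv[A [B [nA nB sub]]].
have h1 : nbhs x (f @^-1` A) by exact: cf x _ nA.
have h2 : nbhs x (g @^-1` B) by exact: cg x _ nB.
by apply: filterS (filterI h1 h2) => z [Az Bz]; apply: sub.
Qed.

Lemma cont_fst {U V : topologicalType} : continuous (@fst U V).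
Proof.
move=> [x y] C nC; change (nbhs (x, y) (fst @^-1` C)).
have ny : nbhs y (@setT V) by apply: filterT.
have := nbhsX nC ny.
apply: filterS => -[? ?] [] //.
Qed.

Lemma cont_snd {U V : topologicalType} : continuous (@snd U V).
Proof.
move=> [x y] C nC; change (nbhs (x, y) (snd @^-1` C)).
by apply: filterS (nbhsX (filterT : nbhs x setT) nC) => -[? ?] [].
Qed.

Lemma cont_cst {U V : topologicalType} (c : V) : continuous (fun _ : U => c).
Proof.
move=> x C nC; change (nbhs x ((fun _ => c) @^-1` C)).
have -> : (fun _ : U => c) @^-1` C = setT.
  by apply/seteqP; split => // z _; exact: (nbhs_singleton nC).
exact: filterT.
Qed.

Lemma cont_id {U : topologicalType} : continuous (fun x : U => x).
Proof. by move=> x C nC. Qed.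

Lemma piY_cont : continuous (@piY d T Omega).
Proof.
apply/quotient_continuous.
have -> : (@piY d T Omega) \o \pi_Y = fst by apply: funext => p /=; rewrite piY_pi.
exact: cont_fst.
Qed.

Lemma piY_open (U : set Y) : open U -> open (piY @` U).
Proof.
move=> oU; have -> : piY @` U = fst @` (\pi_Y @^-1` U).
  apply/seteqP; split => x [y Uy <-].
    by exists (repr y) => //=; rewrite reprK.
  by exists (\pi_Y y) => //; rewrite piY_pi.
exact: fst_open.
Qed.

Lemma piY_surj (x : Xsp T) : exists y : Y, piY y = x.
Proof. by exists (\pi_Y (x, lbullet)); rewrite piY_pi. Qed.

Lemma compact_Label : compact [set: Label].
Proof. by apply: finite_compact; exact: finite_finset. Qed.

Lemma Y_compact : compact [set: T] -> compact [set: Y].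
Proof.
move=> cT.
have -> : [set: Y] = \pi_Y @` setT.
  by apply/seteqP; split => // y _; exists (repr y) => //; rewrite reprK.
apply: continuous_compact; first by apply: continuous_subspaceT; exact: pi_continuous.
rewrite -setXTT; apply: compact_setX; last exact: compact_Label.
by rewrite -setXTT; apply: compact_setX.
Qed.

Definition sig (t : Label) (x : Xsp T) : Xsp T :=
  if t == lup then (x.1, Omega) else if t == ldown then (Omega, x.2) else (Omega, Omega).
Definition Psi (p : Xsp T * Label) : Xsp T * Xsp T := (p.1, sig p.2 p.1).

Lemma Psi_nf p : Psi (nf p) = Psi p.
Proof.
case: p => [[a b] t]; rewrite nfE /Psi /sig /=.
by case: (label_cases t) => ->; case: (eqVneq a Omega) => [->|];
   case: (eqVneq b Omega) => [->|] //=; rewrite ?eqxx ?andbT ?andbF //=.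
Qed.

Lemma Psi_inj p q : Psi p = Psi q -> nf p = nf q.
Proof.
case: p q => [[a b] t] [[a' b'] t']; rewrite /Psi /sig !nfE /= => -[<- <-].
case: (label_cases t) => ->; case: (label_cases t') => ->; rewrite ?eqxx //=;
  move=> [] //; (try move=> ->); (try move=> ->); rewrite ?eqxx ?andbT ?orbT ?if_same //=.

Qed.

Definition Phi (y : Y) := Psi (repr y).

Lemma Phi_pi p : Phi (\pi_Y p) = Psi p.
Proof. by rewrite /Phi -Psi_nf nf_repr Psi_nf. Qed.

Lemma Psi_cont : continuous Psi.
Proof.
apply: label_cont => t; apply: cont_pair; first exact: cont_id.
rewrite /sig /=; case: (label_cases t) => -> /=.
- by apply: cont_cst.
- by apply: cont_pair; [exact: cont_fst|exact: cont_cst].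
- by apply: cont_pair; [exact: cont_cst|exact: cont_snd].
Qed.

Lemma Phi_cont : continuous Phi.
Proof.
apply/quotient_continuous.
have -> : Phi \o \pi_Y = Psi by apply: funext => p /=; rewrite Phi_pi.
exact: Psi_cont.
Qed.

Lemma Phi_inj : injective Phi.
Proof.
move=> y1 y2 /Psi_inj /piE; rewrite !reprK //.
Qed.

Lemma Y_hausdorff : hausdorff_space Y.
Proof.
apply: (inj_hausdorff _ Phi_cont Phi_inj).
by apply: prod_hausdorff; apply: prod_hausdorff; exact: order_hausdorff.
Qed.

End Yfacts.
Section Fibers.
Context {d : Order.disp_t} (T : orderTopologicalType d) (Omega : T).
Local Notation Y := (Ysp Omega).
Local Notation nf := (nf Omega).

Lemma fiberP (x : Xsp T) (y : Y) : fiber Omega x y <-> exists t, y = \pi_Y (x, t).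
Proof.
split; last by move=> [t ->]; rewrite /fiber /= piY_pi.
rewrite /fiber /= /piY => <-; exists (repr y).2.
by rewrite -surjective_pairing reprK.
Qed.

Lemma fiber_card (x : Xsp T) (lab : nat -> Label) n :
  (forall t, exists2 k, (k < n)%N & nf (x, t) = nf (x, lab k)) ->
  (forall k k', (k < n)%N -> (k' < n)%N -> nf (x, lab k) = nf (x, lab k') -> k = k') ->
  (fiber Omega x #= `I_n)%card.
Proof.
move=> hs hi.
have -> : fiber Omega x = (fun k => \pi_Y (x, lab k)) @` `I_n.
  apply/seteqP; split => y.
    move=> /fiberP[t ->]; have [k kn e] := hs t; exists k => //; exact/piE.
  by move=> [k _ <-]; apply/fiberP; exists (lab k).
apply: inj_card_eq => k k'; rewrite !inE /= => kn k'n /piE; exact: hi.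
Qed.

Definition lab3 (k : nat) : Label := if k == 0%N then lbullet else if k == 1%N then lup else ldown.

Lemma fiber_card3 (x : Xsp T) : (x.1 < Omega)%O -> (x.2 < Omega)%O ->
  (fiber Omega x #= `I_3)%card.
Proof.
case: x => a b /= aO bO; have aO' : (a == Omega) = false by rewrite lt_eqF.
have bO' : (b == Omega) = false by rewrite lt_eqF.
apply: (fiber_card _ (lab3)).
  move=> t; case: (label_cases t) => ->; [exists 0%N|exists 1%N|exists 2%N] => //.
move=> k k' kn k'n; rewrite !nfE aO' bO' /= => -[].
by case: k k' kn k'n => [|[|[|]]] [|[|[|]]].
Qed.

Lemma fiber_card2a (x : Xsp T) : x.1 = Omega -> (x.2 < Omega)%O ->
  (fiber Omega x #= `I_2)%card.
Proof.
case: x => a b /= -> bO; have bO' : (b == Omega) = false by rewrite lt_eqF.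
apply: (fiber_card _ (fun k => if k == 0%N then lbullet else ldown)).
  move=> t; case: (label_cases t) => ->; [exists 0%N|exists 0%N|exists 1%N] => //;
  by rewrite !nfE eqxx bO'.
move=> k k' kn k'n; rewrite !nfE eqxx bO' /= => -[].
by case: k k' kn k'n => [|[|]] [|[|]].
Qed.

Lemma fiber_card2b (x : Xsp T) : (x.1 < Omega)%O -> x.2 = Omega ->
  (fiber Omega x #= `I_2)%card.
Proof.
case: x => a b /= aO ->; have aO' : (a == Omega) = false by rewrite lt_eqF.
apply: (fiber_card _ (fun k => if k == 0%N then lbullet else lup)).
  move=> t; case: (label_cases t) => ->; [exists 0%N|exists 1%N|exists 0%N] => //;
  by rewrite !nfE eqxx aO'.
move=> k k' kn k'n; rewrite !nfE eqxx aO' /= => -[].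
by case: k k' kn k'n => [|[|]] [|[|]].
Qed.

Lemma fiber_card1 : (fiber Omega (Omega, Omega) #= `I_1)%card.
Proof.
apply: (fiber_card _ (fun _ => lbullet)).
  by move=> t; exists 0%N => //; rewrite !nfE eqxx.
by move=> [|] [|].
Qed.

End Fibers.
Section Normal.
Context {Z : topologicalType} (S : set Z).

Lemma nbhs_sub_in (z : Z) (P : set Z) : S z -> nbhs z P ->
  nbhs (z : subspace S) (P `&` S).
Proof.
move=> Sz nP; case: (nbhs_subspaceP S z) => // _.
by rewrite withinE; exists P => //; rewrite -setIA setIid.
Qed.

Lemma nbhs_sub_out (z : Z) : ~ S z -> nbhs (z : subspace S) [set z].
Proof. by move=> nSz; case: (nbhs_subspaceP S z) => // _ y. Qed.

Lemma normal_sub :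
  (forall A B : set Z, A `<=` S -> B `<=` S -> closure A `&` S `<=` A ->
     closure B `&` S `<=` B -> A `&` B = set0 ->
     exists U V, [/\ open U, open V, A `<=` U, B `<=` V & U `&` V `&` S = set0]) ->
  normal_space (subspace S).
Proof.
move=> Hsep C cC N /set_nbhsP [O [oO CO ON]].
have [V0 oV0 V0S] := (open_subspaceP S O).1 oO.
have [K cK KS] := (closed_subspaceP S C).1 cC.
pose A := C `&` S; pose B := S `&` ~` V0.
have [U [V [oU oV AU BV UV]]] : exists U V : set Z, [/\ open U, open V, A `<=` U, B `<=` V & U `&` V `&` S = set0].
  apply: (Hsep A B).
  - by move=> z [].
  - by move=> z [].
  - move=> z [clz Sz]; have : K z.
      rewrite ((closure_id K).1 cK); apply: closure_subset clz => y [Cy Sy].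
      by have : (C `&` S) y by []; rewrite -KS => -[].
    by move=> Kz; have : (K `&` S) z by []; rewrite KS.
  - move=> z [clz Sz]; split => //.
    have cV : closed (~` V0) by rewrite closedC.
    by rewrite ((closure_id (~` V0)).1 cV); apply: closure_subset clz => y [].
  - apply/seteqP; split => // z [[Cz Sz] [_ nV0]]; apply: nV0.
    have OSz : (O `&` S) z by split => //; exact: CO.
    by move: OSz; rewrite -V0S => -[].
exists ((U `&` S) `|` (C `&` ~` S)); last first.
  move=> z clz; apply: contrapT => nNz.
  have nOz : ~ O z by move=> /ON.
  case: (pselect (S z)) => Sz.
    have Bz : B z.
      split => // V0z; apply: nOz; have VSz : (V0 `&` S) z by [].
      by move: VSz; rewrite V0S => -[].
    have [y [[[Uy Sy]|[_ nSy]] [Vy Sy']]] := clz _ (nbhs_sub_in _ _ Sz (open_nbhs_nbhs (conj oV (BV _ Bz)))).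
      by have : (U `&` V `&` S) y by []; rewrite UV.
    by apply: nSy.
  have [y [[[_ Sy]|[Cy _]] /= yz]] := clz _ (nbhs_sub_out _ Sz); first by apply: Sz; rewrite -yz.
  by apply: nNz; apply: ON; apply: CO; rewrite -yz.
apply/set_nbhsP; exists ((U `&` S) `|` (C `&` ~` S)); split => //.
  apply: openU; first by apply/open_subspaceP; exists U => //; rewrite -setIA setIid.
  by apply: open_subspace_out => z [].
move=> z Cz; case: (pselect (S z)) => Sz; last by right.
by left; split => //; apply: AU.
Qed.

End Normal.

Lemma sep_closures {Z : topologicalType} : hausdorff_space Z -> compact [set: Z] ->
  forall A B : set Z, closure A `&` closure B = set0 ->
  exists U V : set Z, [/\ open U, open V, A `<=` U, B `<=` V & U `&` V = set0].
Proof.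
move=> hZ cZ A B AB.
have nZ := compact_normal hZ cZ.
have cA : closed (closure A) by exact: closed_closure.
have sN : set_nbhs (closure A) (~` closure B).
  apply/set_nbhsP; exists (~` closure B); split => //.
    by apply: closed_openC; exact: closed_closure.
  by move=> z clA clB; have : (closure A `&` closure B) z by []; rewrite AB.
have [W /set_nbhsP [O [oO AO OW]] clW] := nZ _ cA _ sN.
exists O, (~` closure W); split => //.
- by apply: closed_openC; exact: closed_closure.
- by move=> z Az; apply: AO; exact: subset_closure.
- by move=> z Bz clWz; have := clW _ clWz; apply; exact: subset_closure.
- by apply/seteqP; split => // z [Oz]; apply; apply: subset_closure; exact: OW.
Qed.
Section Ord.
Context {d : Order.disp_t} (T : orderTopologicalType d) (Omega : T).
Context (hmax : forall a : T, (a <= Omega)%O)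
  (hwo : forall A : set T, A !=set0 -> exists2 a, A a & forall b, A b -> (a <= b)%O)
  (hcount : forall a : T, (a < Omega)%O -> countable [set b : T | (b < a)%O])
  (hunc : ~ countable [set b : T | (b < Omega)%O]).
Local Open Scope order_scope.

Lemma countableU2 {U} (A B : set U) : countable A -> countable B -> countable (A `|` B).
Proof.
move=> cA cB; have sub : A `|` B `<=` \bigcup_(i in [set: bool]) (if i then A else B).
  by move=> y; case=> H; [exists true|exists false].
apply: (sub_countable (subset_card_le sub)).
by apply: bigcup_countable; [exact: countableP|case].
Qed.

Lemma cnt_le (x : T) : x < Omega -> countable [set y | y <= x].
Proof.
move=> xO; apply: (@sub_countable _ _ _ ([set y | y < x] `|` [set x])).
  by apply: subset_card_le => y /=; rewrite le_eqVlt => /orP[/eqP->|]; [right|left].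
by apply: countableU2; [exact: hcount|exact: countable1].
Qed.

Lemma bound_countable (S : set T) : countable S -> S `<=` [set b | b < Omega] ->
  exists2 b, b < Omega & forall s, S s -> s < b.
Proof.
move=> cS SW; apply: contrapT => nb; apply: hunc.
have sub : [set b | b < Omega] `<=` \bigcup_(s in S) [set y | y <= s].
  move=> b bO; apply: contrapT => nin; apply: nb; exists b => // s Ss.
  by rewrite ltNge; apply/negP => sb; apply: nin; exists s.
apply: (sub_countable (subset_card_le sub)).
by apply: bigcup_countable => // s Ss; apply: cnt_le; apply: SW.
Qed.

Lemma W0 : exists w0 : T, w0 < Omega.
Proof.
apply: contrapT => nw; apply: hunc; suff -> : [set b : T | b < Omega] = set0 by [].
by apply/seteqP; split => // b bO; apply: nw; exists b.
Qed.

Lemma succ_ex (x : T) : x < Omega -> exists2 s, x < s & forall y, y < s -> y <= x.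
Proof.
move=> xO; have [|s xs smin] := hwo [set y | x < y]; first by exists Omega.
by exists s => // y ys; rewrite leNgt; apply/negP => /smin; rewrite leNgt ys.
Qed.

Lemma open_le (x : T) : x < Omega -> open [set y | y <= x].
Proof.
move=> /succ_ex[s xs sm]; suff -> : [set y | y <= x] = (`]-oo, s[)%classic by exact: lray_open.
apply/seteqP; split => y /=; rewrite in_itv /=; first by move=> yx; exact: le_lt_trans xs.
exact: sm.
Qed.

Lemma open_Ioc (c x : T) : x < Omega -> open [set y | c < y /\ y <= x].
Proof.
move=> /succ_ex[s xs sm]; suff -> : [set y | c < y /\ y <= x] = (`]c, s[)%classic by exact: itv_open.
apply/seteqP; split => y /=; rewrite in_itv /=; first by move=> [-> yx]; exact: le_lt_trans xs.
by move=> /andP[-> /sm].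
Qed.

Lemma nbhs_lt (x y0 : T) (N : set T) : y0 < x -> nbhs x N ->
  exists2 c, c < x & forall y, c < y -> y <= x -> N y.
Proof.
move=> y0x /nbhs_char[//|H]; exists y0 => // y _; exact: H.
Qed.

Lemma lub_ex (B : set T) : exists c, (forall b, B b -> b <= c) /\
  (forall c', (forall b, B b -> b <= c') -> c <= c').
Proof.
have [|c ub cmin] := hwo [set c | forall b, B b -> b <= c]; first by exists Omega.
by exists c.
Qed.

Lemma lub_lt (B : set T) c : (forall b, B b -> b <= c) ->
  (forall c', (forall b, B b -> b <= c') -> c <= c') ->
  forall e, e < c -> exists2 b, B b & e < b.
Proof.
move=> ub cmin e ec; apply: contrapT => nb.
have : c <= e by apply: cmin => b Bb; rewrite leNgt; apply/negP => eb; apply: nb; exists b.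
by rewrite leNgt ec.
Qed.

Definition lub (B : set T) : T := projT1 (cid (lub_ex B)).
Lemma lub_ub B b : B b -> b <= lub B.
Proof. by move=> Bb; have [+ _] := projT2 (cid (lub_ex B)); apply. Qed.
Lemma lub_min B c : (forall b, B b -> b <= c) -> lub B <= c.
Proof. by have [_ +] := projT2 (cid (lub_ex B)); apply. Qed.
Lemma lub_approx B e : e < lub B -> exists2 b, B b & e < b.
Proof. by apply: lub_lt; [exact: lub_ub|exact: lub_min]. Qed.

Lemma compactT : compact [set: T].
Proof.
move=> F PF _.
have [|p [B0 FB0 ->] pmin] := hwo [set p | exists2 B, F B & p = lub B].
  by exists (lub setT), setT => //; exact: filterT.
exists (lub B0); split => //; move=> B N FB Np.
have FBB : F (B `&` B0) by apply: filterI.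
have eqL : lub (B `&` B0) = lub B0.
  apply: le_anti; apply/andP; split; first by apply: lub_min => b [_ /lub_ub].
  apply: pmin; by exists (B `&` B0).
case: (nbhs_char _ _ Np) => [[c cL sub]|sub].
  rewrite -eqL in cL; have [b Bb cb] := lub_approx _ _ cL.
  exists b; split; first by case: Bb.
  by apply: sub => //; rewrite -eqL; exact: lub_ub.
have [b Bb] := filter_ex FBB; exists b; split; first by case: Bb.
by apply: sub; rewrite -eqL; exact: lub_ub.
Qed.


Lemma chain (R : nat -> T -> T -> Prop) :
  (forall k eta, eta < Omega -> exists2 xi, xi < Omega & eta < xi /\ R k eta xi) ->
  exists g : nat -> T, exists gam : T,
    [/\ gam < Omega, (forall k, R k (g k) (g k.+1)), (forall k, g k < gam),
        (forall k m, (k <= m)%N -> g k <= g m) & (forall del, del < gam -> exists k, del < g k)].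
Proof.
move=> hR; have [w0 w0O] := W0.
have : forall ke : nat * T, exists xi,
   ke.2 < Omega -> [/\ xi < Omega, ke.2 < xi & R ke.1 ke.2 xi].
  move=> [k e] /=; case: (pselect (e < Omega)) => eO.
    by have [xi ? [? ?]] := hR k e eO; exists xi.
  by exists Omega.
case/choice => nx Hnx.
pose g := fix g k := if k is k'.+1 then nx (k', g k') else w0.
have gO : forall k, g k < Omega by elim => //= k IH; have [] := Hnx (k, g k) IH.
have gS : forall k, g k < g k.+1 /\ R k (g k) (g k.+1).
  by move=> k; have [_ ? ?] := Hnx (k, g k) (gO k).
have gmono : forall k m, (k <= m)%N -> g k <= g m.
  move=> k; elim => [|m IH]; first by rewrite leqn0 => /eqP ->.
  rewrite leq_eqVlt => /orP[/eqP ->//|]; rewrite ltnS => /IH km.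
  by apply: le_trans km _; apply: ltW; case: (gS m).
have cg : countable (range g).
  by apply: (sub_countable (card_image_le g setT)); exact: countableP.
have [|b bO gb] := bound_countable _ cg; first by move=> _ [k _ <-]; exact: gO.
exists g, (lub (range g)); split.
- by apply: le_lt_trans bO; apply: lub_min => _ [k _ <-]; apply: ltW; apply: gb; exists k.
- by move=> k; case: (gS k).
- by move=> k; apply: lt_le_trans (proj1 (gS k)) _; apply: lub_ub; exists k.+1.
- exact: gmono.
- by move=> del /lub_approx[_ [k _ <-] dk]; exists k.
Qed.

Definition cofinal (x : T) (N : nat -> set T) :=
  forall M, nbhs x M -> exists K, forall k, (K <= k)%N -> N k `<=` M.

Lemma cof_pt (x : T) : cofinal x (fun _ => [set x]).
Proof. by move=> M /nbhs_singleton Mx; exists 0%N => k _ y ->. Qed.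

Lemma cof_itv (g : nat -> T) gam : (forall k m, (k <= m)%N -> g k <= g m) ->
  (forall k, g k < gam) -> (forall del, del < gam -> exists k, del < g k) ->
  cofinal gam (fun k => [set y | g k < y /\ y <= gam]).
Proof.
move=> gm ggam gsup M nM.
have [c cg sub] := nbhs_lt _ _ _ (ggam 0%N) nM.
have [K cK] := gsup c cg; exists K => k Kk y [gy yg]; apply: sub => //.
by apply: lt_le_trans cK _; apply: le_trans (gm _ _ Kk) (ltW gy).
Qed.

Lemma nbseq (a : T) : a < Omega ->
  exists N : nat -> set T, (forall k, nbhs a (N k)) /\ cofinal a N.
Proof.
move=> aO; case: (pselect (exists c, c < a)) => [[c ca]|nc]; last first.
  exists (fun _ => [set y | y <= a]); split.
    by move=> k; apply: open_nbhs_nbhs; split; [exact: open_le|exact: lexx].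
  move=> M /nbhs_char[[c ca _]|sub]; first by exfalso; apply: nc; exists c.
  by exists 0%N => k _ y; apply: sub.
have : countable [set b | b < a] by exact: hcount.
case/pfcard_geP => [e0|/surjfunPex[e eE]].
  by have : [set b | b < a] c by []; rewrite e0.
have eA k : e k < a by have : [set b | b < a] (e k) by rewrite eE; exists k.
pose m := fix m k := if k is k'.+1 then Order.max (m k') (e k) else e 0%N.
have mA : forall k, m k < a by elim => [|k IH] //=; rewrite gt_max IH eA.
have em : forall j k, (j <= k)%N -> e j <= m k.
  move=> j; elim => [|k IH]; first by rewrite leqn0 => /eqP ->.
  rewrite leq_eqVlt => /orP[/eqP ->|]; first by rewrite /= le_max lexx orbT.
  by rewrite ltnS => /IH ejk /=; rewrite le_max ejk.
have mm : forall k l, (k <= l)%N -> m k <= m l.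
  move=> k; elim => [|l IH]; first by rewrite leqn0 => /eqP ->.
  rewrite leq_eqVlt => /orP[/eqP ->//|]; rewrite ltnS => /IH kl /=.
  by rewrite le_max kl.
exists (fun k => [set y | m k < y /\ y <= a]); split.
  by move=> k; apply: open_nbhs_nbhs; split; [exact: open_Ioc|split; [exact: mA|exact: lexx]].
move=> M /nbhs_char[[c' ca' sub]|sub].
  have : [set b | b < a] c' by [].
  rewrite eE => -[K _ eK]; exists K => k Kk y [my ya]; apply: sub => //.
  by rewrite -eK; apply: le_lt_trans (em _ _ Kk) my.
by exists 0%N => k _ y [_ ya]; apply: sub.
Qed.

Lemma cl_seq (A : set (Xsp T)) x1 x2 (N1 N2 : nat -> set T) :
  cofinal x1 N1 -> cofinal x2 N2 ->
  (forall k, exists p, [/\ A p, N1 k p.1 & N2 k p.2]) -> closure A (x1, x2).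
Proof.
move=> c1 c2 hp M /nbhsX_inv[M1 [M2 [n1 n2 sub]]].
have [K1 h1] := c1 _ n1; have [K2 h2] := c2 _ n2.
have [p [Ap p1 p2]] := hp (maxn K1 K2).
exists p; split => //; apply: sub; split.
  by apply: (h1 (maxn K1 K2)) => //; rewrite leq_maxl.
by apply: (h2 (maxn K1 K2)) => //; rewrite leq_maxr.
Qed.

Lemma cl_pts (A : set (Xsp T)) (z : Xsp T) M1 M2 : closure A z ->
  nbhs z.1 M1 -> nbhs z.2 M2 -> exists p, [/\ A p, M1 p.1 & M2 p.2].
Proof.
case: z => z1 z2 clz n1 n2.
have [p [Ap [? ?]]] := clz _ (nbhsX n1 n2); by exists p.
Qed.

Lemma nbhs_ray (eta x : T) : eta < x -> nbhs x [set y | eta < y].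
Proof.
move=> ex; apply: open_nbhs_nbhs; split => //.
have -> : [set y | eta < y] = (`]eta, +oo[)%classic.
  by apply/seteqP; split => y /=; rewrite in_itv /= andbT.
exact: rray_open.
Qed.

Lemma s3_lt (z : Xsp T) : stratum3 Omega z -> z.1 < Omega /\ z.2 < Omega.
Proof. by []. Qed.

Lemma cl3_disj (A B : set (Xsp T)) : A `<=` stratum3 Omega -> B `<=` stratum3 Omega ->
  closure A `&` stratum3 Omega `<=` A -> closure B `&` stratum3 Omega `<=` B ->
  A `&` B = set0 -> closure A `&` closure B = set0.
Proof.
move=> AS BS cA cB AB.
have contra3 z : stratum3 Omega z -> closure A z -> closure B z -> False.
  move=> Sz clA clB; have : (A `&` B) z by split; [apply: cA|apply: cB].
  by rewrite AB.
apply/seteqP; split => // -[a b] [clA clB].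
have := hmax a; rewrite le_eqVlt => /orP[/eqP ea|aO];
have := hmax b; rewrite le_eqVlt => /orP[/eqP eb|bO].
-
  subst a b.
  have [|g [gam [gO gR ggam gm gsup]]] := chain (fun k eta xi =>
     (exists p, [/\ A p, eta < p.1 <= xi & eta < p.2 <= xi]) /\
     (exists p, [/\ B p, eta < p.1 <= xi & eta < p.2 <= xi])).
    move=> k eta eO.
    have [pA [ApA pA1 pA2]] := cl_pts _ _ _ _ clA (nbhs_ray _ _ eO) (nbhs_ray _ _ eO).
    have [pB [BpB pB1 pB2]] := cl_pts _ _ _ _ clB (nbhs_ray _ _ eO) (nbhs_ray _ _ eO).
    have [pA1O pA2O] := AS _ ApA; have [pB1O pB2O] := BS _ BpB.
    exists (Order.max (Order.max pA.1 pA.2) (Order.max pB.1 pB.2)).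
      by rewrite !gt_max pA1O pA2O pB1O pB2O.
    split; first by rewrite !lt_max pA1.
    split; [exists pA|exists pB]; split => //; rewrite ?pA1 ?pA2 ?pB1 ?pB2 /= !le_max lexx ?orbT //.
  have Hcof := cof_itv _ _ gm ggam gsup.
  have pts (C : set (Xsp T)) : (forall k, exists p, [/\ C p, g k < p.1 <= g k.+1 & g k < p.2 <= g k.+1]) ->
      closure C (gam, gam).
    move=> hC; apply: (cl_seq _ _ _ _ _ Hcof Hcof) => k; have [p [Cp /andP[p1 p1'] /andP[p2 p2']]] := hC k.
    exists p; split => //; split => //; apply: le_trans (ltW (ggam k.+1)); done.
  apply: (contra3 (gam, gam)); first by split.
    by apply: pts => k; have [[p ?] _] := gR k; exists p.
  by apply: pts => k; have [_ [p ?]] := gR k; exists p.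
-
  subst a; have [N [nN cN]] := nbseq _ bO.
  have [|g [gam [gO gR ggam gm gsup]]] := chain (fun k eta xi =>
     (exists p, [/\ A p, eta < p.1 <= xi & N k p.2]) /\
     (exists p, [/\ B p, eta < p.1 <= xi & N k p.2])).
    move=> k eta eO.
    have [pA [ApA pA1 pA2]] := cl_pts _ _ _ _ clA (nbhs_ray _ _ eO) (nN k).
    have [pB [BpB pB1 pB2]] := cl_pts _ _ _ _ clB (nbhs_ray _ _ eO) (nN k).
    have [pA1O _] := AS _ ApA; have [pB1O _] := BS _ BpB.
    exists (Order.max pA.1 pB.1); first by rewrite !gt_max pA1O pB1O.
    split; first by rewrite !lt_max pA1.
    split; [exists pA|exists pB]; split => //; rewrite ?pA1 ?pB1 /= !le_max lexx ?orbT //.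
  have Hcof := cof_itv _ _ gm ggam gsup.
  have pts (C : set (Xsp T)) : (forall k, exists p, [/\ C p, g k < p.1 <= g k.+1 & N k p.2]) ->
      closure C (gam, b).
    move=> hC; apply: (cl_seq _ _ _ _ _ Hcof cN) => k; have [p [Cp /andP[p1 p1'] p2]] := hC k.
    exists p; split => //; split => //; apply: le_trans (ltW (ggam k.+1)); done.
  apply: (contra3 (gam, b)); first by split.
    by apply: pts => k; have [[p ?] _] := gR k; exists p.
  by apply: pts => k; have [_ [p ?]] := gR k; exists p.
-
  subst b; have [N [nN cN]] := nbseq _ aO.
  have [|g [gam [gO gR ggam gm gsup]]] := chain (fun k eta xi =>
     (exists p, [/\ A p, eta < p.2 <= xi & N k p.1]) /\
     (exists p, [/\ B p, eta < p.2 <= xi & N k p.1])).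
    move=> k eta eO.
    have [pA [ApA pA1 pA2]] := cl_pts _ _ _ _ clA (nN k) (nbhs_ray _ _ eO).
    have [pB [BpB pB1 pB2]] := cl_pts _ _ _ _ clB (nN k) (nbhs_ray _ _ eO).
    have [_ pA2O] := AS _ ApA; have [_ pB2O] := BS _ BpB.
    exists (Order.max pA.2 pB.2); first by rewrite !gt_max pA2O pB2O.
    split; first by rewrite !lt_max pA2.
    split; [exists pA|exists pB]; split => //; rewrite ?pA2 ?pB2 /= !le_max lexx ?orbT //.
  have Hcof := cof_itv _ _ gm ggam gsup.
  have pts (C : set (Xsp T)) : (forall k, exists p, [/\ C p, g k < p.2 <= g k.+1 & N k p.1]) ->
      closure C (a, gam).
    move=> hC; apply: (cl_seq _ _ _ _ _ cN Hcof) => k; have [p [Cp /andP[p1 p1'] p2]] := hC k.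
    exists p; split => //; split => //; apply: le_trans (ltW (ggam k.+1)); done.
  apply: (contra3 (a, gam)); first by split.
    by apply: pts => k; have [[p ?] _] := gR k; exists p.
  by apply: pts => k; have [_ [p ?]] := gR k; exists p.
- by apply: (contra3 (a, b)).
Qed.

Lemma open_X (P Q : set T) : open P -> open Q -> open (P `*` Q : set (Xsp T)).
Proof.
move=> oP oQ; rewrite openE => -[x y] [Px Qy].
exact: nbhsX (open_nbhs_nbhs (conj oP Px)) (open_nbhs_nbhs (conj oQ Qy)).
Qed.

Lemma open_ltO : open [set y : T | y < Omega].
Proof.
have -> : [set y : T | y < Omega] = (`]-oo, Omega[)%classic.
  by apply/seteqP; split => y /=; rewrite in_itv.
exact: lray_open.
Qed.

Lemma XZ_hausdorff : hausdorff_space (Xsp T).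
Proof. by apply: prod_hausdorff; exact: order_hausdorff. Qed.

Lemma XZ_compact : compact [set: Xsp T].
Proof. by rewrite -setXTT; apply: compact_setX; exact: compactT. Qed.

Lemma normal3 : normal_space (subspace (stratum3 Omega)).
Proof.
apply: normal_sub => A B AS BS cA cB AB.
have [U [V [oU oV AU BV UV]]] :=
  sep_closures XZ_hausdorff XZ_compact _ _ (cl3_disj _ _ AS BS cA cB AB).
by exists U, V; split => //; rewrite UV set0I.
Qed.

Lemma normal1 : normal_space (subspace (stratum1 Omega)).
Proof.
apply: normal_sub => A B AS BS _ _ AB.
case: (pselect (A (Omega, Omega))) => Ap.
  exists setT, set0; split; [exact: openT|exact: open0|by []| |by rewrite setTI set0I].
  move=> z Bz; have := BS _ Bz; rewrite /stratum1 /= => zE; subst z.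
  exact: (disjP _ _ _ AB Ap).
exists set0, setT; split; [exact: open0|exact: openT| |by []|by rewrite !set0I].
by move=> z Az; have := AS _ Az; rewrite /stratum1 /= => zE; subst z.
Qed.

Lemma cl2a_disj (A B : set (Xsp T)) : A `<=` stratum2 Omega -> B `<=` stratum2 Omega ->
  closure A `&` stratum2 Omega `<=` A -> closure B `&` stratum2 Omega `<=` B ->
  A `&` B = set0 ->
  closure (A `&` [set z | z.1 = Omega]) `&` closure (B `&` [set z | z.1 = Omega]) = set0.
Proof.
move=> AS BS cA cB AB.
set A1 := A `&` [set z | z.1 = Omega]; set B1 := B `&` [set z | z.1 = Omega].
have contra2 z : stratum2 Omega z -> closure A1 z -> closure B1 z -> False.
  move=> Sz clA clB; have : (A `&` B) z.
    split; [apply: cA|apply: cB]; split => //;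
    [apply: closure_subset clA => ? []|apply: closure_subset clB => ? []] => //.
  by rewrite AB.
have A1p p : A1 p -> p.1 = Omega /\ p.2 < Omega.
  move=> [/AS [H|[p1 _]] e] //; by rewrite e ltxx in p1.
have B1p p : B1 p -> p.1 = Omega /\ p.2 < Omega.
  move=> [/BS [H|[p1 _]] e] //; by rewrite e ltxx in p1.
apply/seteqP; split => // -[a b] [clA clB].
have ea : a = Omega.
  apply/eqP; rewrite eq_le hmax /=; rewrite leNgt; apply/negP => aO.
  have [p [/A1p[p1 _] pa _]] := cl_pts _ _ _ _ clA (open_nbhs_nbhs (conj (open_le _ aO) (lexx a)))
    (filterT : nbhs b setT).
  by move: pa; rewrite /= p1 leNgt aO.
subst a; have := hmax b; rewrite le_eqVlt => /orP[/eqP eb|bO]; last first.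
  by apply: (contra2 (Omega, b)) => //; left.
subst b.
have [|g [gam [gO gR ggam gm gsup]]] := chain (fun k eta xi =>
   (exists p, A1 p /\ eta < p.2 <= xi) /\ (exists p, B1 p /\ eta < p.2 <= xi)).
  move=> k eta eO.
  have [pA [ApA _ pA2]] := cl_pts _ _ _ _ clA (filterT : nbhs Omega setT) (nbhs_ray _ _ eO).
  have [pB [BpB _ pB2]] := cl_pts _ _ _ _ clB (filterT : nbhs Omega setT) (nbhs_ray _ _ eO).
  have [_ pA2O] := A1p _ ApA; have [_ pB2O] := B1p _ BpB.
  exists (Order.max pA.2 pB.2); first by rewrite !gt_max pA2O pB2O.
  split; first by rewrite !lt_max pA2.
  split; [exists pA|exists pB]; split => //; rewrite ?pA2 ?pB2 /= !le_max lexx ?orbT //.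
have Hcof := cof_itv _ _ gm ggam gsup.
have pts (C : set (Xsp T)) : (forall p, C p -> p.1 = Omega) ->
    (forall k, exists p, C p /\ g k < p.2 <= g k.+1) -> closure C (Omega, gam).
  move=> C1 hC; apply: (cl_seq _ _ _ _ _ (cof_pt Omega) Hcof) => k.
  have [p [Cp /andP[p1 p1']]] := hC k.
  exists p; split => //; first exact: C1.
  by split => //; apply: le_trans (ltW (ggam k.+1)).
apply: (contra2 (Omega, gam)); first by left; split => //; apply: (lt_trans (ggam 0%N)) => //; apply: gO.
  by apply: pts; [by move=> p /A1p[]|move=> k; have [[p ?] _] := gR k; exists p].
by apply: pts; [by move=> p /B1p[]|move=> k; have [_ [p ?]] := gR k; exists p].
Qed.

Lemma cl2b_disj (A B : set (Xsp T)) : A `<=` stratum2 Omega -> B `<=` stratum2 Omega ->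
  closure A `&` stratum2 Omega `<=` A -> closure B `&` stratum2 Omega `<=` B ->
  A `&` B = set0 ->
  closure (A `&` [set z | z.2 = Omega]) `&` closure (B `&` [set z | z.2 = Omega]) = set0.
Proof.
move=> AS BS cA cB AB.
set A1 := A `&` [set z | z.2 = Omega]; set B1 := B `&` [set z | z.2 = Omega].
have contra2 z : stratum2 Omega z -> closure A1 z -> closure B1 z -> False.
  move=> Sz clA clB; have : (A `&` B) z.
    split; [apply: cA|apply: cB]; split => //;
    [apply: closure_subset clA => ? []|apply: closure_subset clB => ? []] => //.
  by rewrite AB.
have A1p p : A1 p -> p.2 = Omega /\ p.1 < Omega.
  move=> [/AS [[_ p1]|[H1 H2]] e]; [by rewrite e ltxx in p1|by split].
have B1p p : B1 p -> p.2 = Omega /\ p.1 < Omega.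
  move=> [/BS [[_ p1]|[H1 H2]] e]; [by rewrite e ltxx in p1|by split].
apply/seteqP; split => // -[a b] [clA clB].
have eb : b = Omega.
  apply/eqP; rewrite eq_le hmax /=; rewrite leNgt; apply/negP => bO.
  have [p [/A1p[p1 _] _ pb]] := cl_pts _ _ _ _ clA (filterT : nbhs a setT)
    (open_nbhs_nbhs (conj (open_le _ bO) (lexx b))).
  by move: pb; rewrite /= p1 leNgt bO.
subst b; have := hmax a; rewrite le_eqVlt => /orP[/eqP ea|aO]; last first.
  by apply: (contra2 (a, Omega)) => //; right.
subst a.
have [|g [gam [gO gR ggam gm gsup]]] := chain (fun k eta xi =>
   (exists p, A1 p /\ eta < p.1 <= xi) /\ (exists p, B1 p /\ eta < p.1 <= xi)).
  move=> k eta eO.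
  have [pA [ApA pA1 _]] := cl_pts _ _ _ _ clA (nbhs_ray _ _ eO) (filterT : nbhs Omega setT).
  have [pB [BpB pB1 _]] := cl_pts _ _ _ _ clB (nbhs_ray _ _ eO) (filterT : nbhs Omega setT).
  have [_ pA1O] := A1p _ ApA; have [_ pB1O] := B1p _ BpB.
  exists (Order.max pA.1 pB.1); first by rewrite !gt_max pA1O pB1O.
  split; first by rewrite !lt_max pA1.
  split; [exists pA|exists pB]; split => //; rewrite ?pA1 ?pB1 /= !le_max lexx ?orbT //.
have Hcof := cof_itv _ _ gm ggam gsup.
have pts (C : set (Xsp T)) : (forall p, C p -> p.2 = Omega) ->
    (forall k, exists p, C p /\ g k < p.1 <= g k.+1) -> closure C (gam, Omega).
  move=> C1 hC; apply: (cl_seq _ _ _ _ _ Hcof (cof_pt Omega)) => k.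
  have [p [Cp /andP[p1 p1']]] := hC k.
  exists p; split => //; last exact: C1.
  by split => //; apply: le_trans (ltW (ggam k.+1)).
apply: (contra2 (gam, Omega)); first by right; split => //; apply: (lt_trans (ggam 0%N)) => //; apply: gO.
  by apply: pts; [by move=> p /A1p[]|move=> k; have [[p ?] _] := gR k; exists p].
by apply: pts; [by move=> p /B1p[]|move=> k; have [_ [p ?]] := gR k; exists p].
Qed.

Lemma normal2 : normal_space (subspace (stratum2 Omega)).
Proof.
apply: normal_sub => A B AS BS cA cB AB.
have [U1 [V1 [oU1 oV1 AU1 BV1 UV1]]] :=
  sep_closures XZ_hausdorff XZ_compact _ _ (cl2a_disj _ _ AS BS cA cB AB).
have [U2 [V2 [oU2 oV2 AU2 BV2 UV2]]] :=
  sep_closures XZ_hausdorff XZ_compact _ _ (cl2b_disj _ _ AS BS cA cB AB).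
have o2 : open [set z : Xsp T | z.2 < Omega].
  have -> : [set z : Xsp T | z.2 < Omega] = setT `*` [set y | y < Omega].
    by apply/seteqP; split => z /=; [move=> ?; split|case].
  by apply: open_X; [exact: openT|exact: open_ltO].
have o1 : open [set z : Xsp T | z.1 < Omega].
  have -> : [set z : Xsp T | z.1 < Omega] = [set y | y < Omega] `*` setT.
    by apply/seteqP; split => z /=; [move=> ?; split|case].
  by apply: open_X; [exact: open_ltO|exact: openT].
exists ((U1 `&` [set z | z.2 < Omega]) `|` (U2 `&` [set z | z.1 < Omega])),
       ((V1 `&` [set z | z.2 < Omega]) `|` (V2 `&` [set z | z.1 < Omega])).
split.
- by apply: openU; apply: openI.
- by apply: openU; apply: openI.
- move=> z Az; case: (AS _ Az) => [[z1 z2]|[z1 z2]].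
    by left; split => //; apply: AU1.
  by right; split => //; apply: AU2.
- move=> z Bz; case: (BS _ Bz) => [[z1 z2]|[z1 z2]].
    by left; split => //; apply: BV1.
  by right; split => //; apply: BV2.
- apply/seteqP; split => // z [[Uz Vz] Sz]; case: Sz => [[z1 z2]|[z1 z2]].
    case: Uz => [[U1z _]|[_ /=]]; last by rewrite z1 ltxx.
    case: Vz => [[V1z _]|[_ /=]]; last by rewrite z1 ltxx.
    exact: (disjP _ _ _ UV1 U1z V1z).
  case: Uz => [[_ /=]|[U2z _]]; first by rewrite z2 ltxx.
  case: Vz => [[_ /=]|[V2z _]]; first by rewrite z2 ltxx.
  exact: (disjP _ _ _ UV2 U2z V2z).
Qed.

Lemma fiber_finite (x : Xsp T) : finite_set (fiber Omega x).
Proof.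
apply/finite_setP; case: x => a b.
have := hmax a; rewrite le_eqVlt => /orP[/eqP ea|aO];
have := hmax b; rewrite le_eqVlt => /orP[/eqP eb|bO].
- by subst a b; exists 1%N; exact: fiber_card1.
- by exists 2%N; exact: fiber_card2a.
- by exists 2%N; exact: fiber_card2b.
- by exists 3%N; exact: fiber_card3.
Qed.

Lemma cont_loc_const {X Z : topologicalType} (g : X -> Z) :
  (forall x, nbhs x [set x' | g x' = g x]) -> continuous g.
Proof.
move=> h x C nC; have Cg := nbhs_singleton nC.
by apply: filterS (h x) => x' /= ->.
Qed.

Section Final.
Context (R : realType) (w : Ysp Omega -> R).
Context (hc : forall f : Ysp Omega -> R, continuous f ->
                 continuous (fun x : Xsp T => \sum_(y \in fiber Omega x) w y * f y)).

Lemma sum_single (F : Ysp Omega -> R) x y0 : fiber Omega x y0 ->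
  (forall y, fiber Omega x y -> y <> y0 -> F y = 0) ->
  \sum_(y \in fiber Omega x) F y = F y0.
Proof.
move=> fy0 h; rewrite (fsbigD1 y0) //; last exact: fiber_finite.
by rewrite fsbig1 ?Monoid.mulm1 // => y [fy ny]; apply: h.
Qed.

Lemma region_cont (t0 : Label) (c : Xsp T -> T) : continuous c ->
  (forall x t, c x < Omega -> ((nf Omega (x, t)).2 == t0) = (t == t0)) ->
  forall g' : T, g' < Omega -> forall x0 : Xsp T, c x0 <= g' ->
  forall eps : R, 0 < eps ->
  nbhs x0 [set x | c x <= g' -> `|w (\pi_(Ysp Omega) (x, t0)) - w (\pi_(Ysp Omega) (x0, t0))| < eps].
Proof.
move=> cc hnf g' gO x0 cx0 eps e0.
pose f (y : Ysp Omega) : R :=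
  if ((nf Omega (repr y)).2 == t0) && (c (nf Omega (repr y)).1 <= g') then 1 else 0.
have fpi p : f (\pi_(Ysp Omega) p) = if (p.2 == t0) && (c p.1 <= g') then 1 else 0.
  rewrite /f nf_repr nf1; case: (boolP (c p.1 <= g')) => h; last by rewrite !andbF.
  by rewrite !andbT; case: p h => x t h; rewrite hnf //; apply: le_lt_trans h gO.
have fcont : continuous f.
  apply/quotient_continuous.
  have -> : f \o \pi_(Ysp Omega) = (fun p => if (p.2 == t0) && (c p.1 <= g') then 1 else 0 : R).
    by apply: funext => p /=; rewrite fpi.
  apply: label_cont => t; apply: cont_loc_const => x /=.
  case: (boolP (c x <= g')) => h.
    have : nbhs x (c @^-1` [set y | y <= g']).
      by apply: cc; apply: open_nbhs_nbhs; split; [exact: open_le|exact: h].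
    by apply: filterS => x' /= ->.
  have : nbhs x (c @^-1` [set y | g' < y]).
    by apply: cc; apply: nbhs_ray; rewrite ltNge.
  by apply: filterS => x' /= h'; rewrite leNgt h' /= !andbF.
have Gx x : c x <= g' -> \sum_(y \in fiber Omega x) w y * f y = w (\pi_(Ysp Omega) (x, t0)).
  move=> h; rewrite (sum_single _ _ (\pi_(Ysp Omega) (x, t0))).
  - by rewrite fpi eqxx h mulr1.
  - by apply/fiberP; exists t0.
  move=> y /fiberP[t ->] ny; rewrite fpi; case: (eqVneq t t0) => [e|nt] /=.
    by exfalso; apply: ny; rewrite e.
  by rewrite mulr0.
have H : nbhs x0 [set x | `|\sum_(y \in fiber Omega x0) w y * f y - \sum_(y \in fiber Omega x) w y * f y| < eps].
  exact: ((cvgrPdist_lt _ _).1 (hc f fcont x0) eps e0).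
apply: filterS H => x /= h hx; by rewrite -Gx // -Gx // distrC.
Qed.


Lemma eps_small (e : R) : 0 < e -> exists K, forall k, (K <= k)%N -> ((k.+1)%:R)^-1 < e.
Proof.
move=> e0; exists (Num.trunc (e^-1)) => k Kk.
rewrite invf_plt ?posrE ?ltr0Sn //.
apply: lt_le_trans (truncnS_gt _) _; rewrite ler_nat ltnS //.
Qed.

Lemma small_eq (r : R) : (forall e, 0 < e -> `|r| < e + e) -> r = 0.
Proof.
move=> h; apply/eqP; apply: contraT => rn.
have r0 : 0 < `|r| / 2 by rewrite divr_gt0 // normr_gt0.
by have := h _ r0; rewrite -splitr ltxx.
Qed.

Lemma sum3 (F : Ysp Omega -> R) x : stratum3 Omega x ->
  \sum_(y \in fiber Omega x) F y = F (\pi_(Ysp Omega) (x, lbullet)) +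
     (F (\pi_(Ysp Omega) (x, lup)) + F (\pi_(Ysp Omega) (x, ldown))).
Proof.
case: x => a b [/= aO bO].
have aO' : (a == Omega) = false by rewrite lt_eqF.
have bO' : (b == Omega) = false by rewrite lt_eqF.
have nfx t : nf Omega ((a, b), t) = ((a, b), t) by rewrite nfE aO' bO'.
have dif t t' : \pi_(Ysp Omega) ((a, b), t) = \pi_(Ysp Omega) ((a, b), t') -> t = t'.
  by move/piE; rewrite !nfx => -[].
have fin := fiber_finite (a, b).
have fb t : fiber Omega (a, b) (\pi_(Ysp Omega) ((a, b), t)) by apply/fiberP; exists t.
rewrite (fsbigD1 (\pi_(Ysp Omega) ((a, b), lbullet))) //.
rewrite (fsbigD1 (\pi_(Ysp Omega) ((a, b), lup))); last 2 first.
- exact: finite_setD.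
- by split => // /dif.
rewrite (fsbigD1 (\pi_(Ysp Omega) ((a, b), ldown))); last 2 first.
- by apply: finite_setD; exact: finite_setD.
- by split; [split => // /dif|move/dif].
rewrite fsbig1 ?Monoid.mulm1 //.
move=> y [[[/fiberP[t ->] n1] n2] n3].
by case: (label_cases t) => et; subst t; [case: (n1 erefl)|case: (n2 erefl)|case: (n3 erefl)].

Qed.


Lemma hnf_down (x : Xsp T) t : x.2 < Omega -> ((nf Omega (x, t)).2 == ldown) = (t == ldown).
Proof.
case: x => a b bO; rewrite nfE; move: bO => /= bO; rewrite (lt_eqF bO) /= !andbF orbF.
by case: (label_cases t) => ->; case: (a == Omega) => //=.
Qed.

Lemma hnf_up (x : Xsp T) t : x.1 < Omega -> ((nf Omega (x, t)).2 == lup) = (t == lup).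
Proof.
case: x => a b aO; rewrite nfE; move: aO => /= aO; rewrite (lt_eqF aO) /=.
by case: (label_cases t) => ->; case: (b == Omega) => //=.
Qed.

Lemma no_w (hw1 : forall x, \sum_(y \in fiber Omega x) w y = 1)
  (h2 : forall x, stratum2 Omega x -> forall y, fiber Omega x y -> w y = 2^-1)
  (h3 : forall x, stratum3 Omega x -> forall y, fiber Omega x y -> 0 < w y) : False.
Proof.
pose yt (x : Xsp T) t := \pi_(Ysp Omega) (x, t).
pose ep (k : nat) : R := ((k.+1)%:R)^-1.
have ep0 k : 0 < ep k by rewrite invr_gt0 ltr0Sn.
have [w0 w0O] := W0.
have uE a : a < Omega -> w (yt (Omega, a) ldown) = 2^-1.
  by move=> aO; apply: (h2 (Omega, a)); [left|apply/fiberP; exists ldown].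
have vE a : a < Omega -> w (yt (a, Omega) lup) = 2^-1.
  by move=> aO; apply: (h2 (a, Omega)); [right|apply/fiberP; exists lup].
have factC k a : a < Omega -> exists2 c, c < Omega & forall b, c < b ->
    `|w (yt (b, a) ldown) - 2^-1| < ep k /\ `|w (yt (a, b) lup) - 2^-1| < ep k.
  move=> aO.
  have Hu := region_cont ldown snd cont_snd (fun x t => @hnf_down x t) a aO (Omega, a) (lexx a) (ep k) (ep0 k).
  have Hv := region_cont lup fst cont_fst (fun x t => @hnf_up x t) a aO (a, Omega) (lexx a) (ep k) (ep0 k).
  have [M1 [M2 [n1 n2 sub]]] := nbhsX_inv _ _ Hu.
  have [M1' [M2' [n1' n2' sub']]] := nbhsX_inv _ _ Hv.
  have [c1 c1O s1] := nbhs_lt _ _ _ w0O n1.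
  have [c2 c2O s2] := nbhs_lt _ _ _ w0O n2'.
  exists (Order.max c1 c2); first by rewrite gt_max c1O c2O.
  move=> b; rewrite gt_max => /andP[cb1 cb2]; split.
    rewrite -(uE a aO); apply: (sub (b, a)) => //=; split; [exact: s1|exact: nbhs_singleton].
  rewrite -(vE a aO); apply: (sub' (a, b)) => //=; split; [exact: nbhs_singleton|exact: s2].
have [|g [gam [gO gR ggam gm gsup]]] := chain (fun k eta xi => forall a, a <= eta -> forall b, xi <= b ->
    `|w (yt (b, a) ldown) - 2^-1| < ep k /\ `|w (yt (a, b) lup) - 2^-1| < ep k).
  move=> k eta eO.
  have : forall a : T, exists c : T, a <= eta -> c < Omega /\ forall b, c < b ->
    `|w (yt (b, a) ldown) - 2^-1| < ep k /\ `|w (yt (a, b) lup) - 2^-1| < ep k.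
    move=> a; case: (pselect (a <= eta)) => ae; last by exists Omega.
    by have [c cO hc'] := factC k a (le_lt_trans ae eO); exists c.
  case/choice => cf hcf.
  have cS : countable ([set eta] `|` (cf @` [set a | a <= eta])).
    apply: countableU2; first exact: countable1.
    exact: (sub_countable (card_image_le _ _) (cnt_le _ eO)).
  have [|xi xiO hxi] := bound_countable _ cS.
    by move=> z [-> //|[a ae <-]]; have [] := hcf a ae.
  exists xi => //; split; first by apply: hxi; left.
  move=> a ae b xib; have [_ H] := hcf a ae; apply: H.
  by apply: lt_le_trans xib; apply: hxi; right; exists a.
have gO0 : g 0%N < gam := ggam 0%N.
have gamO := gO.
have [pos_u pos_v] : w (yt (gam, gam) ldown) = 2^-1 /\ w (yt (gam, gam) lup) = 2^-1.
  split; apply/eqP; rewrite -subr_eq0; apply/eqP; apply: small_eq => e e0.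
    have Hu := region_cont ldown snd cont_snd (fun x t => @hnf_down x t) gam gamO (gam, gam) (lexx gam) e e0.
    have [M1 [M2 [n1 n2 sub]]] := nbhsX_inv _ _ Hu.
    have [d1 d1g s1] := nbhs_lt _ _ _ gO0 n1.
    have [d2 d2g s2] := nbhs_lt _ _ _ gO0 n2.
    have md : Order.max d1 d2 < gam by rewrite gt_max d1g d2g.
    have [k1 hk1] := gsup _ md.
    have [k2 hk2] := eps_small _ e0.
    pose k := maxn k1 k2.
    have gk : Order.max d1 d2 < g k by apply: lt_le_trans hk1 (gm _ _ (leq_maxl _ _)).
    move: gk; rewrite gt_max => /andP[gk1 gk2].
    have gkS : g k <= g k.+1 by apply: gm.
    have := sub (g k.+1, g k); rewrite /= => /(_ (conj (s1 _ (lt_le_trans gk1 gkS) (ltW (ggam _))) (s2 _ gk2 (ltW (ggam _))))).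
    move=> /(_ (ltW (ggam _))) H1.
    have [H2 _] := gR k (g k) (lexx _) (g k.+1) (lexx _).
    have H3 := hk2 k (leq_maxr _ _).
    rewrite distrC in H1.
    apply: le_lt_trans (ler_distD (w (yt (g k.+1, g k) ldown)) _ _) _.
    by apply: ltrD => //; apply: lt_trans H2 H3.
  have Hv := region_cont lup fst cont_fst (fun x t => @hnf_up x t) gam gamO (gam, gam) (lexx gam) e e0.
  have [M1 [M2 [n1 n2 sub]]] := nbhsX_inv _ _ Hv.
  have [d1 d1g s1] := nbhs_lt _ _ _ gO0 n1.
  have [d2 d2g s2] := nbhs_lt _ _ _ gO0 n2.
  have md : Order.max d1 d2 < gam by rewrite gt_max d1g d2g.
    have [k1 hk1] := gsup _ md.
  have [k2 hk2] := eps_small _ e0.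
  pose k := maxn k1 k2.
  have gk : Order.max d1 d2 < g k by apply: lt_le_trans hk1 (gm _ _ (leq_maxl _ _)).
  move: gk; rewrite gt_max => /andP[gk1 gk2].
  have gkS : g k <= g k.+1 by apply: gm.
  have := sub (g k, g k.+1); rewrite /= => /(_ (conj (s1 _ gk1 (ltW (ggam _))) (s2 _ (lt_le_trans gk2 gkS) (ltW (ggam _))))).
  move=> /(_ (ltW (ggam _))) H1.
  have [_ H2] := gR k (g k) (lexx _) (g k.+1) (lexx _).
  have H3 := hk2 k (leq_maxr _ _).
  rewrite distrC in H1.
  apply: le_lt_trans (ler_distD (w (yt (g k, g k.+1) lup)) _ _) _.
  by apply: ltrD => //; apply: lt_trans H2 H3.
have S3 : stratum3 Omega (gam, gam) by split.
have e := hw1 (gam, gam); rewrite (sum3 _ _ S3) in e.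
have hb := h3 _ S3 (yt (gam, gam) lbullet) ((fiberP _ _ _ _).2 (ex_intro _ lbullet erefl)).
rewrite /yt in pos_u pos_v hb; rewrite pos_u pos_v in e.
have h12 : (2^-1 + 2^-1 : R) = 1 by rewrite [RHS](splitr 1) mul1r.
rewrite h12 in e.
have : w (\pi_(Ysp Omega) ((gam, gam), lbullet)) = 0 by apply: (addIr 1); rewrite add0r.
by move=> e0; rewrite e0 ltxx in hb.
Qed.

End Final.

Lemma all_parts (R : realType) :
  [/\ branched_cover (@piY d T Omega),
      [/\ (fiber Omega (Omega, Omega) #= `I_1)%card,
      (forall x, stratum2 Omega x -> (fiber Omega x #= `I_2)%card) &
      (forall x, stratum3 Omega x -> (fiber Omega x #= `I_3)%card)],
      [/\ normal_space (subspace (stratum1 Omega)),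
          normal_space (subspace (stratum2 Omega)) &
          normal_space (subspace (stratum3 Omega))] &
      ~ exists w : Ysp Omega -> R,
          [/\ (forall y, 0 <= w y) /\
              (forall x, \sum_(y \in fiber Omega x) w y = 1),
              (forall x, stratum2 Omega x ->
                 forall y, fiber Omega x y -> w y = 2^-1),
              (forall y, fiber Omega (Omega, Omega) y -> w y = 1),
              (forall x, stratum3 Omega x ->
                 forall y, fiber Omega x y -> 0 < w y) &
              (forall f : Ysp Omega -> R, continuous f ->
                 continuous (fun x : Xsp T =>
                   \sum_(y \in fiber Omega x) w y * f y))]].
Proof.
split.
- split.
  + by split; [exact: XZ_compact|exact: XZ_hausdorff].
  + by split; [apply: Y_compact; exact: compactT|exact: Y_hausdorff].
  + exact: piY_cont.
  + exact: piY_open.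
  + split; first exact: piY_surj.
    exists 3%N => -[a b].
    have le3 k : (k <= 3)%N -> (fiber Omega (a, b) #= `I_k)%card ->
        ((@piY d T Omega) @^-1` [set (a, b)] #<= `I_3)%card.
      move=> k3 /card_eqPle[h _]; apply: card_le_trans h _.
      by rewrite card_le_II.
    have := hmax a; rewrite le_eqVlt => /orP[/eqP ea|aO];
    have := hmax b; rewrite le_eqVlt => /orP[/eqP eb|bO].
    * by subst a b; apply: (le3 1%N) => //; exact: fiber_card1.
    * by apply: (le3 2%N) => //; exact: fiber_card2a.
    * by apply: (le3 2%N) => //; exact: fiber_card2b.
    * by apply: (le3 3%N) => //; exact: fiber_card3.
- split.
  + exact: fiber_card1.
  + by move=> [a b] [[/= ea bO]|[/= aO eb]]; [exact: fiber_card2a|exact: fiber_card2b].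
  + by move=> [a b] [/= aO bO]; exact: fiber_card3.
- split; [exact: normal1|exact: normal2|exact: normal3].
- move=> [w [[hw0 hw1] h2 h1 h3 hc]].
  exact: (no_w _ _ hc hw1 h2 h3).
Qed.

End Ord.

Theorem mainTheorem6 {d : Order.disp_t} (T : orderTopologicalType d) (Omega : T)
  (R : realType)
  (* [0,Omega] : Omega is the largest element, *)
  (hmax : forall a : T, (a <= Omega)%O)
  (* the order is a well-order, *)
  (hwo : forall A : set T, A !=set0 -> exists2 a, A a & forall b, A b -> (a <= b)%O)
  (* every proper initial segment [0,a) with a < Omega is countable, *)
  (hcount : forall a : T, (a < Omega)%O -> countable [set b : T | (b < a)%O])
  (* and [0,Omega) is uncountable: Omega is the first uncountable ordinal. *)
  (hunc : ~ countable [set b : T | (b < Omega)%O]) :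
  [/\ branched_cover (@piY d T Omega),
      [/\ (fiber Omega (Omega, Omega) #= `I_1)%card,
      (forall x, stratum2 Omega x -> (fiber Omega x #= `I_2)%card) &
      (forall x, stratum3 Omega x -> (fiber Omega x #= `I_3)%card)],
      [/\ normal_space (subspace (stratum1 Omega)),
          normal_space (subspace (stratum2 Omega)) &
          normal_space (subspace (stratum3 Omega))] &
      ~ exists w : Ysp Omega -> R,
          [/\ (forall y, 0 <= w y) /\
              (forall x, \sum_(y \in fiber Omega x) w y = 1),
              (forall x, stratum2 Omega x ->
                 forall y, fiber Omega x y -> w y = 2^-1),
              (forall y, fiber Omega (Omega, Omega) y -> w y = 1),
              (forall x, stratum3 Omega x ->
                 forall y, fiber Omega x y -> 0 < w y) &
              (forall f : Ysp Omega -> R, continuous f ->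
                 continuous (fun x : Xsp T =>
                   \sum_(y \in fiber Omega x) w y * f y))]].
Proof.
by apply: all_parts.
Qed.
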